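(* Let $\{(X_i,\tau_i):i\in I\}$ be a family of extended locally convex spaces and, for each $i\in I$, let $\tau_{F_i}$ be the finest locally convex topology of $(X_i,\tau_i)$. Let $X=\prod_{i\in I}X_i$ and $\tau=\prod_{i\in I}\tau_i$ (product topology). Then the product topology $\prod_{i\in I}\tau_{F_i}$ is the finest locally convex topology of the extended locally convex space $(X,\tau)$. Moreover, $(X,\prod_{i\in I}\tau_{F_i})^*=(X,\tau)^*$.
   Context: An extended seminorm on a vector space $X$ over $\mathbb{R}$ or $\mathbb{C}$ is a map $\rho:X\to[0,\infty]$ with $\rho(\alpha x)=|\alpha|\rho(x)$ and $\rho(x+y)\le\rho(x)+\rho(y)$. An extended locally convex space $(X,\tau)$ is a vector space with the topology induced by a family $\{\rho_i\}$ of extended seminorms (neighborhood base at $x_0$: $\{x:\max_{i\in J}\rho_i(x-x_0)<\varepsilon\}$, $J$ finite, $\varepsilon>0$). A locally convex topology is one induced in this way by finite-valued seminorms. The finest locally convex topology of an elcs $(X,\tau)$ is the locally convex topology $\tau_F\subseteq\tau$ such that every locally convex topology $\sigma\subseteq\tau$ on $X$ satisfies $\sigma\subseteq\tau_F$. $(Z,\sigma)^*$ denotes the set of $\sigma$-continuous linear functionals on $Z$. *)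

(* Defs.v *)
From Stdlib Require List.
From HB Require Import structures.
From mathcomp Require Import all_boot all_algebra.
From mathcomp Require Import complex.
From mathcomp Require Import boolp classical_sets reals ereal.
Import GRing.Theory Num.Theory ComplexField.

Set Implicit Arguments.
Unset Strict Implicit.
Unset Printing Implicit Defensive.

Local Open Scope ring_scope.
Local Open Scope classical_set_scope.

Definition scal (R : realType) (b : bool) : numFieldType :=
  if b then (R : numFieldType) else (R[i] : numFieldType).

Section DProd.
Variables (K : numFieldType) (I : Type) (X : I -> lmodType K).

Definition dprod := forall i, X i.

HB.instance Definition _ := gen_eqMixin dprod.
HB.instance Definition _ := gen_choiceMixin dprod.

Definition dprod_zero : dprod := fun i => 0.
Definition dprod_opp (x : dprod) : dprod := fun i => - x i.
Definition dprod_add (x y : dprod) : dprod := fun i => x i + y i.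
Definition dprod_scale (a : K) (x : dprod) : dprod := fun i => a *: x i.

Lemma dprod_addA : associative dprod_add.
Proof. by move=> x y z; apply: functional_extensionality_dep => i; rewrite /dprod_add addrA. Qed.
Lemma dprod_addC : commutative dprod_add.
Proof. by move=> x y; apply: functional_extensionality_dep => i; rewrite /dprod_add addrC. Qed.
Lemma dprod_add0 : left_id dprod_zero dprod_add.
Proof. by move=> x; apply: functional_extensionality_dep => i; rewrite /dprod_add add0r. Qed.
Lemma dprod_addN : left_inverse dprod_zero dprod_opp dprod_add.
Proof. by move=> x; apply: functional_extensionality_dep => i; rewrite /dprod_add addNr. Qed.

HB.instance Definition _ :=
  GRing.isZmodule.Build dprod dprod_addA dprod_addC dprod_add0 dprod_addN.

Lemma dprod_scaleA a b v : dprod_scale a (dprod_scale b v) = dprod_scale (a * b) v.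
Proof. by apply: functional_extensionality_dep => i; rewrite /dprod_scale scalerA. Qed.
Lemma dprod_scale1 : left_id 1 dprod_scale.
Proof. by move=> x; apply: functional_extensionality_dep => i; rewrite /dprod_scale scale1r. Qed.
Lemma dprod_scaleDr : right_distributive dprod_scale +%R.
Proof. by move=> a x y; apply: functional_extensionality_dep => i; rewrite /dprod_scale scalerDr. Qed.
Lemma dprod_scaleDl v : {morph dprod_scale^~ v : a b / a + b}.
Proof. by move=> a b; apply: functional_extensionality_dep => i; rewrite /dprod_scale scalerDl. Qed.

HB.instance Definition _ :=
  GRing.Zmodule_isLmodule.Build K dprod dprod_scaleA dprod_scale1 dprod_scaleDr dprod_scaleDl.

End DProd.

Section ELCS.
Variable K : numFieldType.

(* rho : X -> [0, +oo] with rho (a x) = |a| rho x (convention 0 * +oo = 0)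
   and the triangle inequality. *)
Definition ext_seminorm (V : lmodType K) (rho : V -> \bar K) : Prop :=
  (forall x, (0 <= rho x)%E) /\
  (forall (a : K) (x : V), rho (a *: x) = (`|a|%:E * rho x)%E) /\
  (forall x y : V, (rho (x + y)%R <= rho x + rho y)%E).

Definition seminorm_topology (V : lmodType K) (P : set (V -> \bar K))
  : set (set V) :=
  [set U | forall x0, U x0 -> exists (J : seq (V -> \bar K)) (e : K),
      (forall rho, List.In rho J -> P rho) /\ 0 < e /\
      (forall x, (forall rho, List.In rho J -> (rho (x - x0)%R < e%:E)%E) -> U x)].

Definition is_elc_topology (V : lmodType K) (tau : set (set V)) : Prop :=
  exists P : set (V -> \bar K),
    (forall rho, P rho -> ext_seminorm rho) /\ tau = seminorm_topology P.

Definition is_lc_topology (V : lmodType K) (tau : set (set V)) : Prop :=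
  exists P : set (V -> \bar K),
    (forall rho, P rho -> ext_seminorm rho) /\
    (forall rho, P rho -> forall x, (rho x < +oo)%E) /\
    tau = seminorm_topology P.

Definition is_finest_lc_topology (V : lmodType K) (tau tauF : set (set V)) : Prop :=
  is_lc_topology tauF /\ tauF `<=` tau /\
  (forall sigma : set (set V), is_lc_topology sigma -> sigma `<=` tau ->
     sigma `<=` tauF).

Definition linear_functional (V : lmodType K) (f : V -> K) : Prop :=
  forall (a : K) (u v : V), f (a *: u + v) = a * f u + f v.

Definition continuous_wrt (V : lmodType K) (sigma : set (set V)) (f : V -> K) : Prop :=
  forall (x0 : V) (e : K), 0 < e ->
    exists U, sigma U /\ U x0 /\ (forall x, U x -> `|f x - f x0| < e).

Definition dual (V : lmodType K) (sigma : set (set V)) : set (V -> K) :=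
  [set f | linear_functional f /\ continuous_wrt sigma f].

End ELCS.

Definition product_topology (I : Type) (X : I -> Type)
  (T : forall i, set (set (X i))) : set (set (forall i, X i)) :=
  [set U | forall x, U x -> exists (s : seq I) (W : forall i, set (X i)),
     (forall i, List.In i s -> T i (W i) /\ W i (x i)) /\
     (forall y, (forall i, List.In i s -> W i (y i)) -> U y)].

(* Main.v *)
Require Import Defs.
From Stdlib Require List.
From HB Require Import structures.
From mathcomp Require Import all_boot all_order all_algebra.
From mathcomp Require Import complex.
From mathcomp Require Import boolp classical_sets reals ereal.
Import GRing.Theory Num.Theory Order.POrderTheory.
Set Implicit Arguments.
Unset Strict Implicit.
Unset Printing Implicit Defensive.
Local Open Scope ring_scope.
Local Open Scope classical_set_scope.

Section Gen.
Variable K : numFieldType.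

Lemma sn0 (V : lmodType K) (p : V -> \bar K) : ext_seminorm p -> p 0 = 0%E.
Proof. by case=> _ [hZ _]; rewrite -(scale0r (0:V)) hZ normr0 mul0e. Qed.

Lemma sn_fin (V : lmodType K) (p : V -> \bar K) x e : ext_seminorm p ->
  (p x < e%:E)%E -> exists t, p x = t%:E /\ 0 <= t /\ t < e.
Proof.
case=> h0 _; move: (h0 x); case: (p x) => [t| |] //=.
by rewrite lee_fin lte_fin => ? ?; exists t.
Qed.

Definition mn (a b : K) := if a <= b then a else b.
Lemma mn_le a b : 0 < a -> 0 < b -> [/\ 0 < mn a b, mn a b <= a & mn a b <= b].
Proof.
move=> a0 b0; rewrite /mn; case: ifP => hab; split => //.
have : b < a by move: hab; rewrite real_leNgt ?gtr0_real // => /negbFE.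
exact: ltW.
Qed.

Lemma ball_open (V : lmodType K) (P : set (V -> \bar K)) p c e :
  P p -> ext_seminorm p -> seminorm_topology P [set v | (p (v - c)%R < e%:E)%E].
Proof.
move=> Pp sp x0 /= hx0; have [t [ht [t0 te]]] := sn_fin sp hx0.
exists [:: p], (e - t); split; first by move=> rho [<-|[]].
split; first by rewrite subr_gt0.
move=> x hx; have := hx p (or_introl erefl).
move=> /(sn_fin sp) [t1 [ht1 [t10 t1e]]].
have := proj2 (proj2 sp) (x - x0) (x0 - c); rewrite addrA subrK ht ht1 => h.
apply: le_lt_trans h _; rewrite -EFinD lte_fin.
by move: t1e; rewrite ltrBrDr.
Qed.

Lemma st_setI (V : lmodType K) (P : set (V -> \bar K)) U W :
  seminorm_topology P U -> seminorm_topology P W -> seminorm_topology P (U `&` W).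
Proof.
move=> hU hW x0 [/hU [J1 [e1 [J1P [e10 h1]]]] /hW [J2 [e2 [J2P [e20 h2]]]]].
have [m0 m1 m2] := mn_le e10 e20.
exists (J1 ++ J2), (mn e1 e2); split.
  by move=> rho /List.in_app_iff [/J1P|/J2P].
split => // x hx; split.
  apply: h1 => rho hr; apply: lt_le_trans (hx rho _) _; last by rewrite lee_fin.
  by apply/List.in_app_iff; left.
apply: h2 => rho hr; apply: lt_le_trans (hx rho _) _; last by rewrite lee_fin.
by apply/List.in_app_iff; right.
Qed.

Lemma st_impl (V : lmodType K) (P : set (V -> \bar K)) (A : Prop) U :
  (A -> seminorm_topology P U) -> seminorm_topology P (fun v => A -> U v).
Proof.
move=> hU x0 hx0; case: (pselect A) => a.
  have [J [e [JP [e0 h]]]] := hU a x0 (hx0 a).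
  by exists J, e; split => // ; split => // x hx _; apply: h.
by exists [::], 1; split => //; split => // x _ /a.
Qed.

Lemma st_T (V : lmodType K) (P : set (V -> \bar K)) : seminorm_topology P setT.
Proof. by move=> x0 _; exists [::], 1; split. Qed.

End Gen.

Section Prod.
Variables (K : numFieldType) (I : Type) (X : I -> lmodType K).
Implicit Types (x y : dprod X).

Lemma dDE x y i : (x + y) i = x i + y i. Proof. by []. Qed.
Lemma dBE x y i : (x - y) i = x i - y i. Proof. by []. Qed.
Lemma dZE (a : K) x i : (a *: x) i = a *: x i. Proof. by []. Qed.
Lemma d0E i : (0 : dprod X) i = 0. Proof. by []. Qed.

Definition ext i (v : X i) : dprod X := fun j =>
  match pselect (i = j) with left h => eq_rect i X v j h | right _ => 0 end.

Lemma ext_id i (v : X i) : ext v i = v.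
Proof. by rewrite /ext; case: pselect => // h; rewrite (Prop_irrelevance h erefl). Qed.
Lemma ext_ne i j (v : X i) : i <> j -> ext v j = 0 :> X j.
Proof. by rewrite /ext; case: pselect. Qed.
Lemma extL i (a : K) (u v : X i) : ext (a *: u + v) = a *: ext u + ext v.
Proof.
apply: functional_extensionality_dep => j; rewrite dDE dZE.
case: (pselect (i = j)) => h; last by rewrite !ext_ne // scaler0 addr0.
by case: j / h; rewrite !ext_id.
Qed.
Lemma ext0 i : ext (0 : X i) = 0.
Proof.
apply: functional_extensionality_dep => j; case: (pselect (i = j)) => h.
  by case: j / h; rewrite ext_id.
by rewrite ext_ne.
Qed.
Lemma extZ i a (u : X i) : ext (a *: u) = a *: ext u.
Proof. by have := extL a u 0; rewrite !addr0 ext0 addr0. Qed.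
Lemma extD i (u v : X i) : ext (u + v) = ext u + ext v.
Proof. by have := extL 1 u v; rewrite !scale1r. Qed.
Lemma extB i (u v : X i) : ext (u - v) = ext u - ext v.
Proof. by have := extL (-1) v u; rewrite !scaleN1r addrC => ->; rewrite addrC. Qed.

Definition CN (T : forall i, set (set (X i))) (x0 : dprod X) (U : set (dprod X)) :=
  exists (s : seq I) (W : forall i, set (X i)),
    (forall i, List.In i s -> T i (W i) /\ W i (x0 i)) /\
    (forall y, (forall i, List.In i s -> W i (y i)) -> U y).

Lemma CN_mono T x0 (U V : set (dprod X)) : U `<=` V -> CN T x0 U -> CN T x0 V.
Proof. by move=> UV [s [W [h c]]]; exists s, W; split => // y /c /UV. Qed.

Lemma CN_T T x0 : CN T x0 setT.
Proof. by exists [::], (fun _ => setT). Qed.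

Lemma CN_I (P : forall i, set (X i -> \bar K)) x0 U V :
  CN (fun i => seminorm_topology (P i)) x0 U ->
  CN (fun i => seminorm_topology (P i)) x0 V ->
  CN (fun i => seminorm_topology (P i)) x0 (U `&` V).
Proof.
move=> [s1 [W1 [h1 c1]]] [s2 [W2 [h2 c2]]].
exists (s1 ++ s2), (fun j v => (List.In j s1 -> W1 j v) /\ (List.In j s2 -> W2 j v)).
split.
  move=> i hi; split; last by split => h; [exact: (h1 i h).2 | exact: (h2 i h).2].
  by apply: st_setI; apply: st_impl => h; [exact: (h1 i h).1 | exact: (h2 i h).1].
move=> y hy; split; [apply: c1 | apply: c2] => i hi.
  by apply: (hy i (proj2 (List.in_app_iff _ _ _) (or_introl hi))).1.
by apply: (hy i (proj2 (List.in_app_iff _ _ _) (or_intror hi))).2.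
Qed.

Definition lift (P : forall i, set (X i -> \bar K)) : set (dprod X -> \bar K) :=
  [set rho | exists i p, P i p /\ rho = (fun x : dprod X => p (x i))].

Lemma lift_sn P : (forall i p, P i p -> ext_seminorm p) ->
  forall rho, lift P rho -> ext_seminorm rho.
Proof.
move=> hP rho [i [p [Pp ->]]]; have [h0 [hZ hD]] := hP i p Pp.
split=> [x|]; first exact: h0.
split=> [a x|x y] /=; [exact: hZ|exact: hD].
Qed.

Lemma lift_fin P : (forall i p, P i p -> forall v, (p v < +oo)%E) ->
  forall rho, lift P rho -> forall x, (rho x < +oo)%E.
Proof. by move=> hP rho [i [p [Pp ->]]] x; exact: hP. Qed.

Lemma prod_eq P : (forall i p, P i p -> ext_seminorm p) ->
  product_topology (fun i => seminorm_topology (P i)) = seminorm_topology (lift P).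
Proof.
move=> hP; apply/seteqP; split => U.
  move=> hU x0 Ux0; have [s [W [hW cW]]] := hU x0 Ux0.
  suff [J [e [JP [e0 h]]]] : exists J e, (forall rho, List.In rho J -> lift P rho) /\ 0 < e /\
      forall x, (forall rho, List.In rho J -> (rho (x - x0)%R < e%:E)%E) ->
      forall i, List.In i s -> W i (x i).
    by exists J, e; do 2 split => //; move=> x hx; apply: cW; exact: h.
  elim: s hW {cW} => [|i s IH] hW; first by exists [::], 1.
  have [Ji [ei [JiP [ei0 hi]]]] := (hW i (or_introl erefl)).1 (x0 i) (hW i (or_introl erefl)).2.
  have [J [e [JP [e0 h]]]] := IH (fun j hj => hW j (or_intror hj)).
  have [m0 m1 m2] := mn_le ei0 e0.
  exists (map (fun p => fun x : dprod X => p (x i)) Ji ++ J), (mn ei e); split.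
    move=> rho /List.in_app_iff [/List.in_map_iff [p [<- hp]]|/JP //].
    by exists i, p; split => //; exact: JiP.
  split => // x hx j [<-|hj].
    apply: hi => p hp.
    have := hx (fun x => p (x i)) (proj2 (List.in_app_iff _ _ _) (or_introl (List.in_map _ _ _ hp))).
    by move=> /lt_le_trans; apply; rewrite lee_fin.
  apply: h hj => rho hr.
  have := hx rho (proj2 (List.in_app_iff _ _ _) (or_intror hr)).
  by move=> /lt_le_trans; apply; rewrite lee_fin.
move=> hU x0 Ux0; have [J [e [JP [e0 h]]]] := hU x0 Ux0.
change (CN (fun i => seminorm_topology (P i)) x0 U).
refine (@CN_mono _ x0 [set x : dprod X | forall rho, List.In rho J -> (rho (x - (x0 : dprod X))%R < e%:E)%E] U _ _).
  by move=> x hx; apply: h.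
elim: J JP {h} => [|rho J IH] JP; first by refine (@CN_mono _ x0 setT _ _ (CN_T _ _)) => x _ r [].
have := CN_I _ (IH (fun r hr => JP r (or_intror hr))).
move=> /(_ [set x : dprod X | (rho (x - (x0 : dprod X))%R < e%:E)%E]) hI.
apply: CN_mono (hI _); first by move=> x [h1 h2] r [<-|hr] //; exact: h2.
have [i [p [Pp ->]]] := JP rho (or_introl erefl).
set Wi := fun j (v : X j) => forall p', P j p' ->
   (fun x : dprod X => p (x i)) = (fun x => p' (x j)) -> (p' (v - x0 j)%R < e%:E)%E.
have eW : Wi i = [set v | (p (v - x0 i)%R < e%:E)%E].
  apply/funext => v; apply/propext; split; first by move=> H; exact: H p Pp erefl.
  move=> H p' _ hp; suff <- : p = p' by [].
  apply/funext => w; have := congr1 (fun f => f (ext w)) hp.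
  by rewrite /= ext_id.
exists [:: i], Wi; split.
  move=> j [<-|[]]; rewrite eW; split; first by apply: ball_open => //; exact: hP.
  by rewrite /mkset subrr (sn0 (hP _ _ Pp)) lte_fin.
by move=> y hy; exact: hy i (or_introl erefl) p Pp erefl.
Qed.


Lemma sum_le (s : seq I) (F : I -> K) d : (forall i, List.In i s -> F i <= d) ->
  \sum_(i <- s) F i <= (size s)%:R * d.
Proof.
elim: s => [|i s IH] h; first by rewrite big_nil mul0r.
rewrite big_cons /= mulrS mulrDl mul1r; apply: lerD; first by apply: h; left.
by apply: IH => j hj; apply: h; right.
Qed.

Lemma ball_CN (P PF : forall i, set (X i -> \bar K))
  (hP : forall i p, P i p -> ext_seminorm p)
  (hF : forall i (sigma : set (set (X i))), is_lc_topology sigma ->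
      sigma `<=` seminorm_topology (P i) -> sigma `<=` seminorm_topology (PF i))
  (q : dprod X -> \bar K) (sq : ext_seminorm q) (fq : forall x, (q x < +oo)%E)
  (hq : forall (c : dprod X) (e : K),
     product_topology (fun i => seminorm_topology (P i)) [set x | (q (x - c)%R < e%:E)%E]) :
  forall (x0 : dprod X) (e : K), 0 < e ->
  CN (fun i => seminorm_topology (PF i)) x0 [set x | (q (x - x0)%R < e%:E)%E].
Proof.
move=> x0 e e0.
pose qf x := fine (q x).
have qE : forall x, q x = (qf x)%:E.
  by move=> x; rewrite /qf; move: (sq.1 x) (fq x); case: (q x).
have qf0 : forall x, 0 <= qf x by move=> x; have := sq.1 x; rewrite qE lee_fin.
have hT : forall x y, qf (x + y) <= qf x + qf y.
  by move=> x y; move: (sq.2.2 x y); rewrite (qE x) (qE y) (qE (x + y)) -EFinD lee_fin.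
have hZ : forall (a : K) x, qf (a *: x) = `|a| * qf x.
  by move=> a x; rewrite /qf (sq.2.1 a x) qE -EFinM.
have q00 : qf 0 = 0 by rewrite /qf (sn0 sq).
have [s [W [hW cW]]] : CN (fun i => seminorm_topology (P i)) 0 [set x | (q (x - 0)%R < 1%:E)%E].
  by apply: hq; rewrite /mkset subr0 (sn0 sq) lte_fin ltr01.
have hY : forall y, (forall i, List.In i s -> y i = 0) -> qf y = 0.
  move=> y hy.
  have hlt : forall t : K, qf (t *: y) < 1.
    move=> t; have := cW (t *: y).
    rewrite /mkset subr0 qE lte_fin; apply => i hi.
    by rewrite dZE hy // scaler0; exact: (hW i hi).2.
  case: (eqVneq (qf y) 0) => // hne.
  by have := hlt (qf y)^-1; rewrite hZ ger0_norm ?invr_ge0 ?qf0 // mulVf // ltxx.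
have L : forall (x : dprod X) (s' : seq I) (z : dprod X),
    (forall j, ~ List.In j s' -> z j = 0) ->
    (forall j, List.In j s' -> z j = 0 \/ z j = x j) ->
    qf z <= \sum_(i <- s') qf (ext (x i)).
  move=> x; elim => [|i s' IH] z hz1 hz2.
    have -> : z = 0 by apply: functional_extensionality_dep => j; apply: hz1.
    by rewrite q00 big_nil.
  rewrite big_cons.
  have eZ : z = ext (z i) + (z - ext (z i)) by rewrite addrC subrK.
  rewrite {1}eZ; apply: le_trans (hT _ _) _; apply: lerD.
    case: (hz2 i (or_introl erefl)) => ->; last exact: lexx.
    by rewrite ext0 q00.
  apply: IH => j hj; rewrite dBE; case: (pselect (i = j)) => h.
  - by case: j / h {hj}; rewrite ext_id subrr.
  - by rewrite ext_ne // subr0; apply: hz1 => -[/h|/hj].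
  - by case: j / h {hj}; rewrite ext_id subrr; left.
  - by rewrite ext_ne // subr0; apply: hz2; right.
have hsum : forall x, qf x <= \sum_(i <- s) qf (ext (x i)).
  move=> x.
  pose y : dprod X := fun j => if pselect (List.In j s) is left _ then x j else 0.
  have eX : x = y + (x - y) by rewrite addrC subrK.
  rewrite {1}eX; apply: le_trans (hT _ _) _.
  rewrite (hY (x - y)) ?addr0; last first.
    by move=> i hi; rewrite dBE /y; case: pselect => // _; rewrite subrr.
  apply: L => j hj; rewrite /y; case: pselect => //; by right.
pose d := e / (size s).+1%:R.
have d0 : 0 < d by rewrite divr_gt0 // ltr0Sn.
have hB : forall i, seminorm_topology (PF i) [set v | (q (ext (v - x0 i)) < d%:E)%E].
  move=> i; pose qi := fun v : X i => q (ext v).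
  have sqi : ext_seminorm qi.
    split; first by move=> v; exact: sq.1.
    split; first by move=> a v; rewrite /qi extZ; exact: sq.2.1.
    by move=> u v; rewrite /qi extD; exact: sq.2.2.
  apply: (hF i (seminorm_topology [set p | p = qi])).
  - exists [set p | p = qi]; split; first by move=> p ->.
    by split => // p -> v; exact: fq.
  - move=> U' hU' v0 Uv0; have [J' [e' [J'P [e'0 h']]]] := hU' v0 Uv0.
    have [s2 [W2 [hW2 cW2]]] := hq (ext v0) e' (ext v0)
      ltac:(by rewrite /mkset subrr (sn0 sq) lte_fin).
    have hWv : seminorm_topology (P i) (fun v => List.In i s2 -> W2 i v).
      by apply: st_impl => h; exact: (hW2 i h).1.
    have [J'' [e'' [J''P [e''0 h'']]]] := hWv v0
      ltac:(by move=> h; have := (hW2 i h).2; rewrite ext_id).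
    exists J'', e''; split => //; split => // v hv.
    apply: h' => p hp; rewrite (J'P p hp) /qi extB.
    have := cW2 (ext v); rewrite /mkset; apply => j hj.
    case: (pselect (i = j)) => h.
      by case: j / h hj => hj; rewrite ext_id; apply: h'' hv hj.
    by have := (hW2 j hj).2; rewrite !ext_ne.
  - by have := @ball_open K (X i) [set p | p = qi] qi (x0 i) d erefl sqi.
exists s, (fun i => [set v | (q (ext (v - x0 i)) < d%:E)%E]); split.
  by move=> i hi; split => //; rewrite /mkset subrr ext0 (sn0 sq) lte_fin.
move=> y hy; rewrite /mkset qE lte_fin; apply: le_lt_trans (hsum _) _.
apply: (@le_lt_trans _ _ ((size s)%:R * d)).
  apply: sum_le => i hi; apply: ltW; have := hy i hi.
  by rewrite /mkset qE lte_fin dBE.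
rewrite [X in _ < X](_ : e = (size s).+1%:R * d); last first.
  by rewrite /d mulrC divfK // pnatr_eq0.
by rewrite ltr_pM2r // ltr_nat.
Qed.


Lemma finest_prod (P PF : forall i, set (X i -> \bar K))
  (hP : forall i p, P i p -> ext_seminorm p)
  (hF : forall i (sigma : set (set (X i))), is_lc_topology sigma ->
      sigma `<=` seminorm_topology (P i) -> sigma `<=` seminorm_topology (PF i))
  (sigma : set (set (dprod X))) : is_lc_topology sigma ->
  sigma `<=` product_topology (fun i => seminorm_topology (P i)) ->
  sigma `<=` product_topology (fun i => seminorm_topology (PF i)).
Proof.
move=> [Q [hQ [hQf ->]]] hsub U hU x0 Ux0.
have [J [e [JP [e0 h]]]] := hU x0 Ux0.
change (CN (fun i => seminorm_topology (PF i)) x0 U).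
refine (@CN_mono _ x0 [set x : dprod X | forall rho, List.In rho J ->
   (rho (x - (x0 : dprod X))%R < e%:E)%E] U _ _); first by move=> x hx; apply: h.
elim: J JP {h} => [|rho J IH] JP.
  by refine (@CN_mono _ x0 setT _ _ (CN_T _ _)) => x _ r [].
have := CN_I _ (IH (fun r hr => JP r (or_intror hr))).
move=> /(_ [set x : dprod X | (rho (x - (x0 : dprod X))%R < e%:E)%E]) hI.
apply: CN_mono (hI _); first by move=> x [h1 h2] r [<-|hr] //; exact: h2.
have Qr := JP rho (or_introl erefl).
apply: (ball_CN hP hF (hQ _ Qr) (hQf _ Qr)) => // c e'.
by apply: hsub; have := @ball_open _ _ Q rho c e' Qr (hQ _ Qr).
Qed.

End Prod.

Unset Implicit Arguments.

Theorem theorem4p4 (R : realType) (b : bool) (I : Type)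
  (X : I -> lmodType (scal R b))
  (tau tauF : forall i, set (set (X i))) :
  (forall i, is_elc_topology (tau i)) ->
  (forall i, is_finest_lc_topology (tau i) (tauF i)) ->
  let tauX : set (set (dprod X)) := product_topology tau in
  let tauFX : set (set (dprod X)) := product_topology tauF in
  is_elc_topology tauX /\
  is_finest_lc_topology tauX tauFX /\
  dual tauFX = dual tauX.
Proof.
move=> Helc Hfin tauX tauFX; rewrite /tauX /tauFX {tauX tauFX}.
pose P i := proj1_sig (cid (Helc i)).
have hP : forall i p, P i p -> ext_seminorm p := fun i => (proj2_sig (cid (Helc i))).1.
have htau : tau = fun i => seminorm_topology (P i).
  by apply: functional_extensionality_dep => i; exact: (proj2_sig (cid (Helc i))).2.
pose PF i := proj1_sig (cid ((Hfin i).1)).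
have hPF : forall i p, PF i p -> ext_seminorm p := fun i => (proj2_sig (cid ((Hfin i).1))).1.
have hPFf : forall i p, PF i p -> forall v, (p v < +oo)%E :=
  fun i => (proj2_sig (cid ((Hfin i).1))).2.1.
have htauF : tauF = fun i => seminorm_topology (PF i).
  by apply: functional_extensionality_dep => i; exact: (proj2_sig (cid ((Hfin i).1))).2.2.
have hF : forall i (sigma : set (set (X i))), is_lc_topology sigma ->
    sigma `<=` seminorm_topology (P i) -> sigma `<=` seminorm_topology (PF i).
  move=> i sigma; have := (Hfin i).2.2 sigma.
  by rewrite htau htauF.
have hFsub : forall i, seminorm_topology (PF i) `<=` seminorm_topology (P i).
  by move=> i; have := (Hfin i).2.1; rewrite htau htauF.
rewrite htau htauF.
have Hfp := finest_prod hP hF.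
split; first by exists (lift P); split; [exact: lift_sn | exact: prod_eq].
have sub : product_topology (fun i => seminorm_topology (PF i)) `<=`
    product_topology (fun i => seminorm_topology (P i)).
  move=> U hU x hx; have [s [W [hW c]]] := hU x hx.
  by exists s, W; split => // i hi; split; [apply: hFsub; exact: (hW i hi).1 | exact: (hW i hi).2].
split.
  split; first by exists (lift PF); split; [exact: lift_sn | split; [exact: lift_fin | exact: prod_eq]].
  by split.
apply/seteqP; split => f [lin cont]; split => //.
  move=> x0 e e0; have [U [hU [Ux0 hf]]] := cont x0 e e0.
  by exists U; split => //; exact: sub.
have f0 : f 0 = 0.
  by have := lin 1 0 0; rewrite scale1r addr0 mul1r => h; apply/esym/(addrI (f 0)); rewrite addr0.
have fZ : forall a x, f (a *: x) = a * f x by move=> a x; rewrite -[a *: x]addr0 lin f0 addr0.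
have fD : forall x y, f (x + y) = f x + f y.
  by move=> x y; have := lin 1 x y; rewrite scale1r mul1r.
have fB : forall x y, f (x - y) = f x - f y.
  by move=> x y; have := lin (-1) y x; rewrite scaleN1r mulN1r addrC => ->; rewrite addrC.
pose pf := fun x : dprod X => (`|f x|)%:E.
have spf : ext_seminorm pf.
  split; first by move=> x; rewrite /pf lee_fin.
  split; first by move=> a x; rewrite /pf fZ normrM EFinM.
  by move=> x y; rewrite /pf fD -EFinD lee_fin ler_normD.
pose sigma := seminorm_topology [set p | p = pf].
have hsig : sigma `<=` product_topology (fun i => seminorm_topology (P i)).
  move=> U hU x0 Ux0; have [J [e [JP [e0 h]]]] := hU x0 Ux0.
  have [V [hV [Vx0 hfV]]] := cont x0 e e0.
  have [s [W [hW c]]] := hV x0 Vx0.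
  exists s, W; split => // y hy; apply: h => rho hr; rewrite (JP rho hr) /pf fB lte_fin.
  exact: hfV (c y hy).
have lcs : is_lc_topology sigma.
  exists [set p | p = pf]; split; first by move=> p ->.
  split => // p -> x; rewrite /pf; exact: normr_real.
have hsF := Hfp sigma lcs hsig.
move=> x0 e e0.
have hb := @ball_open _ _ [set p | p = pf] pf x0 e erefl spf.
exists [set x : dprod X | (pf (x - x0)%R < e%:E)%E]; split; first exact: hsF.
split; first by rewrite /mkset /pf subrr f0 normr0 lte_fin.
by move=> x; rewrite /mkset /pf fB lte_fin.
Qed.
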